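(* Let $F$ be a finite set. Let ${\mathbb A}^F=(\underline{\mathbb A}^F,\mathbb C^F,e_F)$, where $\underline{\mathbb A}^F:\mathcal F_{ab}\to\mathcal Sets$ is the graded functor $\underline{\mathbb A}^F(D)^{(k)}=\coprod_{Y\subset F,\,|Y|=k}D^Y$ (homomorphisms acting componentwise), $\mathbb C^F=\mathrm{Spec}\,\mathbb C[x_j:j\in F]$, and $e_F(D)$ sends $(g_j)_{j\in Y}\in D^Y$ to the $\mathbb C$-algebra homomorphism $\mathbb C[x_j:j\in F]\to\mathbb C[D]$ with $x_j\mapsto g_j$ for $j\in Y$ and $x_j\mapsto0$ for $j\notin Y$. (Equivalently, for each character $\chi:D\to\mathbb C^*$ the corresponding $\mathbb C$-point is $(\xi_j)_{j\in F}$ with $\xi_j=\chi(g_j)$ if $j\in Y$ and $\xi_j=0$ otherwise.) Then ${\mathbb A}^F$ is an affine variety over $\mathbb F_1$, with $X_{\mathbb Z}=\mathrm{Spec}\,\mathbb Z[x_j:j\in F]$.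
   Context: $\mathcal F_{ab}$ is the category of finite abelian groups and group homomorphisms; $\mathbb Z[D],\mathbb C[D]$ are group rings. A gadget over $\mathbb F_1$ is a triple $X=(\underline X,X_{\mathbb C},e_X)$: a covariant functor $\underline X:\mathcal F_{ab}\to\mathcal Sets$, a variety $X_{\mathbb C}$ over $\mathbb C$, and a natural transformation $e_X$ from $\underline X$ to the functor $D\mapsto\mathrm{Hom}(\mathrm{Spec}\,\mathbb C[D],X_{\mathbb C})$ (for affine $X_{\mathbb C}=\mathrm{Spec}\,\mathcal O$ this is $\mathrm{Hom}_{\mathbb C\text{-alg}}(\mathcal O,\mathbb C[D])$). For an affine scheme of finite type $V=\mathrm{Spec}(\mathcal O)$ over $\mathbb Z$, the gadget $\mathcal G(V)$ has $\underline{\mathcal G(V)}(D)=\mathrm{Hom}(\mathcal O,\mathbb Z[D])$, $\mathcal G(V)_{\mathbb C}=V\otimes_{\mathbb Z}\mathbb C$, and $e$ given by applying $\otimes_{\mathbb Z}\mathbb C$. A morphism of gadgets $\phi:X\to Y$ is a pair $(\underline\phi,\phi_{\mathbb C})$ of a natural transformation $\underline\phi:\underline X\to\underline Y$ and a morphism of $\mathbb C$-varieties $\phi_{\mathbb C}:X_{\mathbb C}\to Y_{\mathbb C}$ such that $e_Y(D)\circ\underline\phi(D)=(\phi_{\mathbb C})_*\circ e_X(D)$ for all $D$. It is an immersion if $\phi_{\mathbb C}$ is an embedding and each $\underline\phi(D)$ is injective. A gadget is graded if $\underline X$ takes values in $\mathbb Z_{\ge0}$-graded sets $\underline X=\coprod_{k\ge0}\underline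 X^{(k)}$, and finite if every $\underline X(D)$ is finite. An affine variety over $\mathbb F_1$ is a finite graded gadget $X$ for which there exist an affine scheme of finite type $X_{\mathbb Z}$ over $\mathbb Z$ and an immersion $i:X\to\mathcal G(X_{\mathbb Z})$ such that for every affine scheme of finite type $V$ over $\mathbb Z$ and every morphism of gadgets $\varphi:X\to\mathcal G(V)$ there is a unique morphism $\varphi_{\mathbb Z}:X_{\mathbb Z}\to V$ with $\varphi=\mathcal G(\varphi_{\mathbb Z})\circ i$ (morphisms of gadgets ignore the grading). *)

(* Defs.v *)
From HB Require Import structures.
From mathcomp Require Import all_boot all_order all_algebra.
Set Implicit Arguments. Unset Strict Implicit. Unset Printing Implicit Defensive.
Import Order.TTheory GRing.Theory Num.Theory.
Local Open Scope ring_scope.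

Section GR.
Variables (R : comNzRingType) (D : finZmodType).
Definition gring : Type := {ffun D -> R}.
HB.instance Definition _ := GRing.Zmodule.on gring.
Definition gmul (f g : gring) : gring := [ffun x => \sum_y f y * g (x - y)].
Definition gone : gring := [ffun x => (x == 0)%:R].
Lemma gmulC : commutative gmul.
Proof.
move=> f g; apply/ffunP=> x; rewrite !ffunE.
rewrite (reindex_inj (can_inj (subKr x))) /=.
by apply: eq_bigr=> y _; rewrite subKr mulrC.
Qed.
Lemma gmul1 : left_id gone gmul.
Proof.
move=> f; apply/ffunP=> x; rewrite !ffunE (bigD1 0) //= big1 ?addr0.
  by rewrite ffunE eqxx mul1r subr0.
by move=> y /negPf ny; rewrite ffunE ny mul0r.
Qed.
Lemma gmulDl : left_distributive gmul +%R.
Proof.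
move=> f g h; apply/ffunP=> x; rewrite !ffunE -big_split /=.
by apply: eq_bigr=> y _; rewrite ffunE mulrDl.
Qed.
Lemma gmulA : associative gmul.
Proof.
move=> f g h; apply/ffunP=> x; rewrite !ffunE.
under eq_bigr do rewrite ffunE big_distrr /=.
under [RHS]eq_bigr do rewrite ffunE big_distrl /=.
rewrite [RHS]exchange_big /=; apply: eq_bigr=> z _.
rewrite [RHS](reindex_inj (addrI z)) /=.
apply: eq_bigr=> w _; rewrite mulrA; congr (_ * _ * _).
  by rewrite addrAC subrr add0r.
by rewrite opprD addrA.
Qed.
Lemma gone_neq0 : gone != 0.
Proof. by apply/eqP=> /ffunP /(_ 0); rewrite !ffunE eqxx => /eqP; rewrite oner_eq0. Qed.
HB.instance Definition _ := GRing.Zmodule_isComNzRing.Build gring gmulA gmulC gmul1 gmulDl gone_neq0.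
End GR.

Definition gdelta (R : comNzRingType) (D : finZmodType) (g : D) : gring R D :=
  [ffun x => (x == g)%:R].
Definition gscal (R : comNzRingType) (D : finZmodType) (c : R) : gring R D :=
  [ffun x => if x == 0 then c else 0].
Definition gcoef (C : comNzRingType) (D : finZmodType) (f : gring int D) : gring C D :=
  [ffun x => (f x)%:~R].
Definition gmap (R : comNzRingType) (D D' : finZmodType) (h : {additive D -> D'})
  (f : gring R D) : gring R D' := [ffun y => \sum_(x | h x == y) f x].

Fixpoint mpoly (R : comNzRingType) (n : nat) : comNzRingType :=
  if n is n'.+1 then ({poly mpoly R n'} : comNzRingType) else R.

Fixpoint mconst (R : comNzRingType) (n : nat) : R -> mpoly R n :=
  match n return R -> mpoly R n with
  | 0 => fun c => c
  | n'.+1 => fun c => (mconst n' c)%:P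
  end.

Fixpoint mvar (R : comNzRingType) (n : nat) : 'I_n -> mpoly R n :=
  match n return 'I_n -> mpoly R n with
  | 0 => fun _ => 0
  | n'.+1 => fun i => if unlift ord_max i is Some j then (mvar R j)%:P else 'X
  end.

Fixpoint meval (R : comNzRingType) (B : comPzRingType) (c : R -> B) (n : nat)
  : ('I_n -> B) -> mpoly R n -> B :=
  match n return ('I_n -> B) -> mpoly R n -> B with
  | 0 => fun _ p => c p
  | n'.+1 => fun v p =>
      \sum_(i < size p) meval c (fun k => v (lift ord_max k)) p`_i * v ord_max ^+ i
  end.

Definition fin_gen (O : comPzRingType) : Prop :=
  exists s : seq O, forall S : {pred O}, subring_closed S ->
    {subset s <= S} -> forall x, x \in S.

Record gadget (C : numClosedFieldType) := Gadget {
  gfun : finZmodType -> Type;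
  gfmap : forall D D' : finZmodType, {additive D -> D'} -> gfun D -> gfun D';
  ggrade : forall D : finZmodType, gfun D -> nat;
  gcoord : comNzRingType;
  gcoord_const : C -> gcoord;
  ge : forall D : finZmodType, gfun D -> gcoord -> gring C D
}.

Section GadgetDefs.
Variables (C : numClosedFieldType) (X : gadget C).

Definition gadget_finite : Prop :=
  forall D : finZmodType, exists (n : nat) (f : 'I_n -> gfun X D), forall a, exists k, f k = a.

Definition gmorph_G (O : comPzRingType)
  (u : forall D : finZmodType, gfun X D -> {rmorphism O -> gring int D})
  (uC : {rmorphism O -> gcoord X}) : Prop :=
  (forall (D D' : finZmodType) (h : {additive D -> D'}) (a : gfun X D),
      u D' (@gfmap C X D D' h a) =1 gmap h \o u D a)
  /\ (forall (D : finZmodType) (a : gfun X D),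
      @ge C X D a \o uC =1 @gcoef C D \o u D a).

Definition closed_embedding (O : comPzRingType) (uC : O -> gcoord X) : Prop :=
  forall S : {pred gcoord X}, subring_closed S ->
    (forall k : C, @gcoord_const C X k \in S) -> (forall o, uC o \in S) ->
    forall b, b \in S.

Definition gimmersion_G (O : comPzRingType)
  (u : forall D : finZmodType, gfun X D -> {rmorphism O -> gring int D})
  (uC : {rmorphism O -> gcoord X}) : Prop :=
  gmorph_G u uC /\ closed_embedding uC /\
  (forall (D : finZmodType) (a b : gfun X D), u D a =1 u D b -> a = b).

Definition affine_F1_with (OZ : comPzRingType) : Prop :=
  gadget_finite /\ fin_gen OZ /\
  exists (i : forall D : finZmodType, gfun X D -> {rmorphism OZ -> gring int D})
         (iC : {rmorphism OZ -> gcoord X}),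
    gimmersion_G i iC /\
    forall (O : comPzRingType), fin_gen O ->
    forall (u : forall D : finZmodType, gfun X D -> {rmorphism O -> gring int D})
           (uC : {rmorphism O -> gcoord X}),
      gmorph_G u uC ->
      exists psi : {rmorphism O -> OZ},
        ((forall (D : finZmodType) (a : gfun X D), u D a =1 i D a \o psi)
          /\ uC =1 iC \o psi)
        /\ forall psi' : {rmorphism O -> OZ},
             ((forall (D : finZmodType) (a : gfun X D), u D a =1 i D a \o psi')
               /\ uC =1 iC \o psi') -> psi' =1 psi.
End GadgetDefs.

Section AF.
Variables (C : numClosedFieldType) (F : finType).

Definition AF (D : finZmodType) : Type :=
  {Y : {set F} & {ffun {j : F | j \in Y} -> D}}.

Definition AFmap (D D' : finZmodType) (h : {additive D -> D'}) (a : AF D) : AF D' :=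
  existT _ (projT1 a) [ffun j => h (projT2 a j)].

Definition AFgrade (D : finZmodType) (a : AF D) : nat := #|projT1 a|.

Definition AFval (R : comNzRingType) (D : finZmodType) (a : AF D) (j : F) : gring R D :=
  match insub j : option {j : F | j \in projT1 a} with
  | Some j' => gdelta R (projT2 a j')
  | None => 0
  end.

Definition AFe (D : finZmodType) (a : AF D) : mpoly C #|F| -> gring C D :=
  meval (@gscal C D) (fun k => AFval C a (enum_val k)).

Definition AFgadget : gadget C :=
  @Gadget C AF AFmap AFgrade (mpoly C #|F|) (@mconst C #|F|) AFe.
End AF.

(* Main.v *)
Require Import Defs.
From HB Require Import structures.
From mathcomp Require Import all_boot all_order all_algebra.
Set Implicit Arguments. Unset Strict Implicit. Unset Printing Implicit Defensive.
Import GRing.Theory.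
Local Open Scope ring_scope.

Definition pairZ (D T : finZmodType) := (D * T)%type.
HB.instance Definition _ (D T : finZmodType) := GRing.Zmodule.on (pairZ D T).
HB.instance Definition _ (D T : finZmodType) := Finite.on (pairZ D T).
Lemma pairZ_add (D T : finZmodType) (a b : pairZ D T) : a + b = (a.1 + b.1, a.2 + b.2).
Proof. by []. Qed.
Lemma pairZ_opp (D T : finZmodType) (a : pairZ D T) : - a = (- a.1, - a.2).
Proof. by []. Qed.
Lemma pairZ_0 (D T : finZmodType) : (0 : pairZ D T) = (0, 0).
Proof. by []. Qed.

Section MkR.
Variables (A B : pzRingType) (f : A -> B) (fA : zmod_morphism f) (fM : monoid_morphism f).
Definition mkR := f.
HB.instance Definition _ := GRing.isZmodMorphism.Build A B mkR fA.
HB.instance Definition _ := GRing.isMonoidMorphism.Build A B mkR fM.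
Definition mkRM : {rmorphism A -> B} := mkR.
End MkR.
Arguments mkR : simpl never.
Arguments mkRM : simpl never.
Section MkA.
Variables (A B : zmodType) (f : A -> B) (fA : zmod_morphism f).
Definition mkA := f.
HB.instance Definition _ := GRing.isZmodMorphism.Build A B mkA fA.
Definition mkAM : {additive A -> B} := mkA.
End MkA.
Arguments mkA : simpl never.
Arguments mkAM : simpl never.

Section GRL.
Variables (R : comNzRingType) (D : finZmodType).
Implicit Types (f g : gring R D) (x y a b : D).
Lemma gmulE f g x : (f * g) x = \sum_y f y * g (x - y).
Proof. by rewrite /GRing.mul /= ffunE. Qed.
Lemma goneE x : @GRing.one (gring R D) x = (x == 0)%:R.
Proof. by rewrite /GRing.one /= ffunE. Qed.
Lemma gaddE f g x : (f + g) x = f x + g x.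
Proof. by rewrite ffunE. Qed.
Lemma goppE f x : (- f) x = - f x.
Proof. by rewrite ffunE. Qed.
Lemma gzeroE x : @GRing.zero (gring R D) x = 0.
Proof. by rewrite ffunE. Qed.
Lemma gsumE I (r : seq I) (P : pred I) (F : I -> gring R D) x :
  (\sum_(i <- r | P i) F i) x = \sum_(i <- r | P i) F i x.
Proof. exact: sum_ffunE. Qed.
Lemma gdeltaE a x : gdelta R a x = (x == a)%:R.
Proof. by rewrite ffunE. Qed.
Lemma gmul_delta f a x : (f * gdelta R a) x = f (x - a).
Proof.
rewrite gmulE (bigD1 (x - a)) //= big1 ?addr0.
  by rewrite gdeltaE opprB addrCA subrr addr0 eqxx mulr1.
move=> y ny; rewrite gdeltaE; case: eqP; rewrite ?mulr0 // => E.
by case/eqP: ny; rewrite -E opprB addrCA subrr addr0.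
Qed.
Lemma gdeltaM a b : gdelta R a * gdelta R b = gdelta R (a + b).
Proof.
apply/ffunP=> x; rewrite gmul_delta !gdeltaE.
by rewrite subr_eq.
Qed.
Lemma gdelta0 : gdelta R (0 : D) = 1.
Proof. by apply/ffunP=> x; rewrite gdeltaE ?goneE. Qed.
Lemma gdeltaX a i : gdelta R a ^+ i = gdelta R (a *+ i).
Proof.
elim: i => [|i IH]; first by rewrite expr0 mulr0n gdelta0.
by rewrite exprS IH gdeltaM mulrS.
Qed.
Lemma gscalE c x : @gscal R D c x = if x == 0 then c else 0.
Proof. by rewrite ffunE. Qed.
Lemma gscal_zmod : zmod_morphism (@gscal R D).
Proof. by move=> c d; apply/ffunP=> x; rewrite gaddE goppE !gscalE; case: eqP; rewrite ?subr0. Qed.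
Lemma gscal_monoid : monoid_morphism (@gscal R D).
Proof.
split; first by apply/ffunP=> x; rewrite gscalE goneE; case: eqP.
move=> c d; apply/ffunP=> x; rewrite gmulE (bigD1 0) //= big1 ?addr0.
  by rewrite !gscalE eqxx subr0; case: eqP; rewrite ?mulr0.
by move=> y /negPf ny; rewrite gscalE ny mul0r.
Qed.
Definition gscalR : {rmorphism R -> gring R D} := mkRM gscal_zmod gscal_monoid.
Lemma gscalRE c : gscalR c = @gscal R D c. Proof. by []. Qed.
End GRL.

Section GMap.
Variables (R : comNzRingType) (D D' : finZmodType) (h : {additive D -> D'}).
Implicit Types (f g : gring R D).
Lemma gmapE f y : gmap h f y = \sum_(x | h x == y) f x.
Proof. by rewrite ffunE. Qed.
Lemma gmap_zmod : zmod_morphism (gmap (R:=R) h).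
Proof.
move=> f g; apply/ffunP=> y; rewrite gaddE goppE !gmapE -sumrN -big_split /=.
by apply: eq_bigr=> x _; rewrite gaddE goppE.
Qed.
Lemma gmap_monoid : monoid_morphism (gmap (R:=R) h).
Proof.
split.
  apply/ffunP=> y; rewrite gmapE goneE big_mkcond /= (bigD1 0) //= big1 ?addr0.
    by rewrite goneE eqxx raddf0 eq_sym; case: eqP.
  by move=> x nx; rewrite goneE (negPf nx); case: ifP.
move=> f g; apply/ffunP=> y; rewrite gmapE.
under eq_bigr do rewrite gmulE.
rewrite gmulE.
transitivity (\sum_z \sum_u (if h (u + z) == y then f z * g u else 0)).
  rewrite exchange_big /=; apply: eq_bigr=> z _; rewrite big_mkcond /=.
  rewrite (reindex_inj (addIr z)) /=; apply: eq_bigr=> u _.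
  by case: ifP; rewrite ?addrK.
under [RHS]eq_bigr do rewrite gmapE big_distrl /=.
under [RHS]eq_bigr do under eq_bigr do rewrite gmapE big_distrr /=.
under [RHS]eq_bigr do rewrite big_mkcond /=.
rewrite [RHS]exchange_big /=; apply: eq_bigr=> z _.
rewrite [RHS](bigD1 (h z)) //= eqxx [X in _ + X]big1 ?addr0; last first.
  by move=> w nw; rewrite eq_sym (negPf nw).
rewrite [RHS]big_mkcond /=; apply: eq_bigr=> u _.
by rewrite raddfD eq_sym -subr_eq eq_sym; case: ifP.
Qed.
Definition gmapR : {rmorphism gring R D -> gring R D'} := mkRM gmap_zmod gmap_monoid.
Lemma gmapRE f : gmapR f = gmap h f. Proof. by []. Qed.
Lemma gmap_delta a : gmap h (gdelta R a) = gdelta R (h a).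
Proof.
apply/ffunP=> y; rewrite gmapE gdeltaE big_mkcond (bigD1 a) //= big1 ?addr0.
  by rewrite gdeltaE eqxx eq_sym; case: eqP.
by move=> x nx; rewrite gdeltaE (negPf nx); case: ifP.
Qed.
Lemma gmap_scal c : gmap h (@gscal R D c) = @gscal R D' c.
Proof.
apply/ffunP=> y; rewrite gmapE gscalE big_mkcond (bigD1 0) //= big1 ?addr0.
  by rewrite gscalE eqxx raddf0 eq_sym; case: eqP.
by move=> x nx; rewrite gscalE (negPf nx); case: ifP.
Qed.
End GMap.

Section GCoef.
Variables (C : numClosedFieldType) (D : finZmodType).
Lemma gcoefE (f : gring int D) x : @gcoef C D f x = (f x)%:~R.
Proof. by rewrite ffunE. Qed.
Lemma gcoef_zmod : zmod_morphism (@gcoef C D).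
Proof. by move=> f g; apply/ffunP=> x; rewrite gaddE goppE !gcoefE gaddE goppE intrB. Qed.
Lemma gcoef_monoid : monoid_morphism (@gcoef C D).
Proof.
split; first by apply/ffunP=> x; rewrite gcoefE !goneE; case: eqP.
move=> f g; apply/ffunP=> x; rewrite gcoefE !gmulE rmorph_sum /=.
by apply: eq_bigr=> y _; rewrite intrM !gcoefE.
Qed.
Definition gcoefR : {rmorphism gring int D -> gring C D} := mkRM gcoef_zmod gcoef_monoid.
Lemma gcoefRE f : gcoefR f = @gcoef C D f. Proof. by []. Qed.
Lemma gcoef_delta a : @gcoef C D (gdelta int a) = gdelta C a.
Proof. by apply/ffunP=> x; rewrite gcoefE !gdeltaE; case: eqP. Qed.
Lemma gcoef_inj : injective (@gcoef C D).
Proof. by move=> f g E; apply/ffunP=> x; move/ffunP: E => /(_ x); rewrite !gcoefE => /intr_inj. Qed.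
End GCoef.

Section Meval.
Variables (R : comNzRingType) (B : comNzRingType).

Lemma meval_S n (c : R -> B) (v : 'I_n.+1 -> B) (p : mpoly R n.+1) :
  meval c v p = (map_poly (meval c (fun k => v (lift ord_max k))) (p : {poly mpoly R n})).[v ord_max].
Proof.
rewrite /= (horner_coef_wide _ (size_poly _ _)); apply: eq_bigr=> i _.
by rewrite coef_poly ltn_ord.
Qed.

Lemma meval_morph (c : {rmorphism R -> B}) n (v : 'I_n -> B) :
  zmod_morphism (meval c v) * monoid_morphism (meval c v).
Proof.
elim: n v => [|n IH] v.
  by split; [move=> x y; exact: rmorphB | split; [exact: rmorph1 | exact: rmorphM]].
have [fA fM] := IH (fun k => v (lift ord_max k)).
pose f := mkRM fA fM.
have cf : commr_rmorph f (v ord_max) by move=> x; exact: mulrC.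
have E : forall p : mpoly R n.+1, meval c v p = horner_morph cf p.
  by move=> p; rewrite meval_S.
split; first by move=> x y; rewrite !E rmorphB.
by split; [rewrite E rmorph1 | move=> x y; rewrite !E rmorphM].
Qed.
Definition mevalR (c : {rmorphism R -> B}) n (v : 'I_n -> B) : {rmorphism mpoly R n -> B} :=
  mkRM (meval_morph c v).1 (meval_morph c v).2.
Lemma mevalRE (c : {rmorphism R -> B}) n (v : 'I_n -> B) p : mevalR c v p = meval c v p.
Proof. by []. Qed.

Lemma meval_ext n (c c' : R -> B) (v v' : 'I_n -> B) :
  c =1 c' -> v =1 v' -> meval c v =1 meval c' v'.
Proof.
elim: n v v' => [|n IH] v v' Ec Ev p /=; first exact: Ec.
apply: eq_bigr=> i _; rewrite Ev (IH _ (fun k => v' (lift ord_max k))) //.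
Qed.

Lemma meval_SR (c : {rmorphism R -> B}) n (v : 'I_n.+1 -> B) (p : mpoly R n.+1) :
  meval c v p = (map_poly (mevalR c (fun k => v (lift ord_max k))) (p : {poly mpoly R n})).[v ord_max].
Proof. exact: meval_S. Qed.
Lemma meval_SC (c : {rmorphism R -> B}) n (v : 'I_n.+1 -> B) (q : mpoly R n) :
  meval c v ((q%:P : {poly mpoly R n}) : mpoly R n.+1) = meval c (fun k => v (lift ord_max k)) q.
Proof.
rewrite meval_SR.
by rewrite map_polyC hornerC.
Qed.
Lemma meval_SX (c : {rmorphism R -> B}) n (v : 'I_n.+1 -> B) :
  meval c v (('X : {poly mpoly R n}) : mpoly R n.+1) = v ord_max.
Proof.
rewrite meval_SR.
by rewrite map_polyX hornerX.
Qed.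
Lemma meval_mvar (c : {rmorphism R -> B}) n (v : 'I_n -> B) k : meval c v (mvar R k) = v k.
Proof.
elim: n v k => [|n IH] v k; first by case: k.
rewrite [mvar _ _]/=; case: unliftP => [j ->|->]; first by rewrite meval_SC IH.
by rewrite meval_SX.
Qed.
Lemma meval_const (c : {rmorphism R -> B}) n (v : 'I_n -> B) r : meval c v (mconst n r) = c r.
Proof. by elim: n v => [|n IH] v //; rewrite [mconst _ _]/= meval_SC IH. Qed.
End Meval.

Lemma meval_phi (R : comNzRingType) (B B' : comPzRingType) (phi : {rmorphism B -> B'})
  (c : R -> B) n (v : 'I_n -> B) p :
  phi (meval c v p) = meval (phi \o c) (phi \o v) p.
Proof.
elim: n v p => [|n IH] v p //=; rewrite rmorph_sum; apply: eq_bigr=> i _.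
by rewrite rmorphM rmorphXn IH.
Qed.

Section Closure.
Variables (A : pzRingType) (S : {pred A}) (Sc : subring_closed S).
Lemma sc1 : 1 \in S. Proof. by case: Sc. Qed.
Lemma scB u v : u \in S -> v \in S -> u - v \in S. Proof. by case: Sc=> _ H _; apply: H. Qed.
Lemma scM u v : u \in S -> v \in S -> u * v \in S. Proof. by case: Sc=> _ _ H; apply: H. Qed.
Lemma sc0 : 0 \in S. Proof. by rewrite -(subrr 1) scB ?sc1. Qed.
Lemma scN u : u \in S -> - u \in S. Proof. by move=> Hu; rewrite -sub0r scB ?sc0. Qed.
Lemma scD u v : u \in S -> v \in S -> u + v \in S.
Proof. by move=> Hu Hv; rewrite -[v]opprK scB ?scN. Qed.
Lemma scX u i : u \in S -> u ^+ i \in S.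
Proof. by move=> Hu; elim: i => [|i IH]; rewrite ?expr0 ?sc1 // exprS scM. Qed.
Lemma scsum I (r : seq I) (P : pred I) (F : I -> A) :
  (forall i, P i -> F i \in S) -> \sum_(i <- r | P i) F i \in S.
Proof. by move=> H; apply: (big_ind (fun x => x \in S)) => //; [exact: sc0 | exact: scD]. Qed.
Lemma scint (z : int) : z%:~R \in S.
Proof.
have Hn : forall m : nat, (m%:R : A) \in S.
  by elim=> [|m IH]; rewrite ?sc0 // mulrS scD ?sc1.
by case: z => m; [exact: Hn | rewrite NegzE mulrNz; apply: scN; exact: Hn].
Qed.
End Closure.

Lemma mclosure (R : comNzRingType) n (S : {pred mpoly R n}) : subring_closed S ->
  (forall r, mconst n r \in S) -> (forall k, mvar R k \in S) -> forall x, x \in S.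
Proof.
elim: n S => [|n IH] S Sc Hc Hv x; first exact: (Hc x).
pose S' := [pred r : mpoly R n | ((r%:P : {poly mpoly R n}) : mpoly R n.+1) \in S].
have Sc' : subring_closed S'.
  split; rewrite ?inE ?polyC1 ?sc1 //.
    by move=> u v; rewrite !inE polyCB; apply: scB.
  by move=> u v; rewrite !inE polyCM; apply: scM.
have HS' : forall r, r \in S'.
  apply: IH => //.
  by move=> k; rewrite inE; have := Hv (lift ord_max k); rewrite /= liftK.
have HX : (('X : {poly mpoly R n}) : mpoly R n.+1) \in S.
  by have := Hv ord_max; rewrite /= unlift_none.
rewrite -[x]coefK poly_def; apply: scsum => // i _.
by rewrite -mul_polyC; apply: scM => //; [exact: HS' | exact: scX].
Qed.

Lemma mconst_int n (z : int) : mconst n z = z%:~R :> mpoly int n.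
Proof. by elim: n => [|n IH]; [rewrite intz | rewrite [mconst _ _]/= IH rmorph_int]. Qed.

Lemma fin_gen_mpoly n : fin_gen (mpoly int n).
Proof.
exists [seq mvar int k | k <- enum 'I_n] => S Sc Hs x.
apply: mclosure => // [r|k]; first by rewrite mconst_int; exact: scint.
by apply: Hs; apply: map_f; rewrite mem_enum.
Qed.

Lemma gdelta_neq0 (R : comNzRingType) (D : finZmodType) (a : D) : gdelta R a != 0.
Proof. by apply/eqP=> /ffunP /(_ a); rewrite gdeltaE gzeroE eqxx => /eqP; rewrite oner_eq0. Qed.

Section AFL.
Variables (F : finType).
Lemma AFval_map (R : comNzRingType) (D D' : finZmodType) (h : {additive D -> D'}) (a : AF F D) j :
  AFval R (AFmap h a) j = gmap h (AFval R a j).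
Proof.
case: a => Y f; rewrite /AFval /=; case: (insub j) => [j'|]; first by rewrite ffunE gmap_delta.
by rewrite -gmapRE raddf0.
Qed.
Lemma AFval_coef (C : numClosedFieldType) (D : finZmodType) (a : AF F D) j :
  @gcoef C D (AFval int a j) = AFval C a j.
Proof.
case: a => Y f; rewrite /AFval /=; case: (insub j) => [j'|]; first by rewrite gcoef_delta.
exact: (raddf0 (gcoefR C D)).
Qed.
Definition afull (D : finZmodType) (g : 'I_#|F| -> D) : AF F D :=
  existT _ [set: F] [ffun j => g (enum_rank (val j))].
Lemma AFval_full (R : comNzRingType) (D : finZmodType) (g : 'I_#|F| -> D) k :
  AFval R (afull g) (enum_val k) = gdelta R (g k).
Proof.
rewrite /AFval /= insubT ?inE // => Hk; by rewrite ffunE /= enum_valK.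
Qed.
Lemma AFval_inj (R : comNzRingType) (D : finZmodType) (a b : AF F D) :
  (forall j, AFval R a j = AFval R b j) -> a = b.
Proof.
case: a => Y f; case: b => Y' f' H.
have EY : Y = Y'.
  apply/setP=> j; have := H j; rewrite /AFval /=.
  case: insubP => [j1 Yj _|/negPf nYj]; case: insubP => [j2 Yj' _|/negPf nYj'] //=.
  - by rewrite Yj Yj'.
  - by move=> E; have := gdelta_neq0 R (f j1); rewrite E eqxx.
  - by move=> E; have := gdelta_neq0 R (f' j2); rewrite -E eqxx.
  by rewrite nYj nYj'.
subst Y'; congr existT; apply/ffunP=> j; have := H (val j); rewrite /AFval /= !valK.
move/ffunP=> /(_ (f j)); rewrite !gdeltaE eqxx.
by case: eqP => // _ /eqP /esym /eqP; rewrite oner_eq0.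
Qed.
End AFL.

Lemma hornerX_mapC (R : comNzRingType) (r : {poly R}) : (map_poly polyC r).['X] = r.
Proof.
rewrite horner_coef size_map_polyC.
transitivity (\sum_(i < size r) r`_i *: 'X^i).
  by apply: eq_bigr=> i _; rewrite coef_map /= mul_polyC.
by rewrite -poly_def coefK.
Qed.

Section IC.
Variable (C : numClosedFieldType).
Lemma intr_zmod n : zmod_morphism (fun z : int => (z%:~R : mpoly C n)).
Proof. by move=> x y; rewrite intrB. Qed.
Lemma intr_monoid n : monoid_morphism (fun z : int => (z%:~R : mpoly C n)).
Proof. by split; [| move=> x y; rewrite intrM]. Qed.
Definition intRR n : {rmorphism int -> mpoly C n} := mkRM (@intr_zmod n) (@intr_monoid n).
Definition iCn n : {rmorphism mpoly int n -> mpoly C n} := mevalR (intRR n) (@mvar C n).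
Lemma intRRE n z : intRR n z = z%:~R. Proof. by []. Qed.
Lemma iCE n r : iCn n r = meval (intRR n) (@mvar C n) r. Proof. by []. Qed.
Lemma iC_mvar n k : iCn n (mvar int k) = mvar C k.
Proof. exact: meval_mvar. Qed.
Lemma iC_S n (q : mpoly int n.+1) : iCn n.+1 q = map_poly (iCn n) (q : {poly mpoly int n}).
Proof.
rewrite /iCn mevalRE meval_SR [mvar C _]/= unlift_none.
rewrite (eq_map_poly (g := polyC \o iCn n)); last first.
  move=> r; rewrite mevalRE /= iCE meval_phi; apply: meval_ext.
    by move=> z; rewrite /= rmorph_int.
  by move=> k; rewrite /= liftK.
by rewrite map_poly_comp hornerX_mapC.
Qed.
Lemma iC_inj n : injective (iCn n).
Proof.
elim: n => [|n IH] p q; first by move=> /intr_inj.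
rewrite !iC_S => E; apply/polyP=> i; apply: IH.
by move: E => /polyP /(_ i); rewrite !coef_map.
Qed.
End IC.

Lemma pairZ_muln (D T : finZmodType) (a : pairZ D T) i : a *+ i = (a.1 *+ i, a.2 *+ i).
Proof. by elim: i => [|i IH]; rewrite ?mulr0n // !mulrS pairZ_add IH. Qed.

Lemma meval_Sdef (R : comNzRingType) (B : comPzRingType) (c : R -> B) n (v : 'I_n.+1 -> B) (p : mpoly R n.+1) :
  meval c v p = \sum_(i < size (p : {poly mpoly R n})) meval c (fun k => v (lift ord_max k)) (p : {poly mpoly R n})`_i * v ord_max ^+ i.
Proof. by []. Qed.

Section Integral.
Variable (C : numClosedFieldType).
Definition IV n (r : mpoly C n) := forall (D : finZmodType) (g : 'I_n -> D) x,
  exists z : int, meval (@gscal C D) (fun k => gdelta C (g k)) r x = z%:~R.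

Lemma iota_zmod (D T : finZmodType) : zmod_morphism (fun x : D => ((x, 0) : pairZ D T)).
Proof. by move=> x y; rewrite pairZ_add pairZ_opp /= subr0. Qed.
Definition iota (D T : finZmodType) : {additive D -> pairZ D T} := mkAM (@iota_zmod D T).

Lemma gmap_iota (D T : finZmodType) (f : gring C D) x (s : T) :
  gmap (iota D T) f (x, s) = if s == 0 then f x else 0.
Proof.
rewrite gmapE big_mkcond (bigD1 x) //= big1 ?addr0.
  by rewrite /= xpair_eqE eqxx eq_sym; case: (s == 0).
by move=> u nu; rewrite /= xpair_eqE (negPf nu).
Qed.

Lemma coef_IV n (p : mpoly C n.+1) : IV p -> forall k, IV (p : {poly mpoly C n})`_k.
Proof.
move=> Hp k D g x.
have [le_pk|lt_kp] := leqP (size (p : {poly mpoly C n})) k.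
  by exists 0; rewrite nth_default // -[meval _ _ _]/(mevalR (gscalR C D) _ 0) raddf0 gzeroE.
set N := size (p : {poly mpoly C n}) in lt_kp *.
pose T : finZmodType := 'Z_N.+1.
have N1 : (1 < N.+1)%N by rewrite ltnS (leq_ltn_trans _ lt_kp).
pose g2 : 'I_n.+1 -> pairZ D T := fun j => if unlift ord_max j is Some j' then (g j', 0) else (0, 1).
have [z Hz] := Hp _ g2 (x, k%:R).
exists z; rewrite -Hz meval_Sdef gsumE.
have Eg : forall i, meval (@gscal C (pairZ D T)) (fun j => gdelta C (g2 (lift ord_max j))) (p : {poly mpoly C n})`_i
   = gmap (iota D T) (meval (@gscal C D) (fun j => gdelta C (g j)) (p : {poly mpoly C n})`_i).
  move=> i; rewrite -gmapRE meval_phi; apply: meval_ext => [c|j] /=.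
    by rewrite gmapRE gmap_scal.
  by rewrite gmapRE gmap_delta /g2 liftK.
rewrite (bigD1 (Ordinal lt_kp)) //= big1 ?addr0.
  rewrite Eg /g2 unlift_none gdeltaX gmul_delta pairZ_muln /=.
  by rewrite pairZ_add pairZ_opp /= mul0rn subr0 subrr gmap_iota eqxx.
move=> i ni; rewrite Eg /g2 unlift_none gdeltaX gmul_delta pairZ_muln /=.
rewrite pairZ_add pairZ_opp /= mul0rn subr0 gmap_iota.
case: eqP => // /eqP; rewrite subr_eq0 => /eqP /(congr1 val).
move=> E; have := etrans (esym (val_Zp_nat N1 k)) (etrans E (val_Zp_nat N1 i)). rewrite !modn_small ?(leq_trans (ltn_ord i)) ?(leq_trans lt_kp) //.
by move=> Eki; case/eqP: ni; apply: val_inj.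
Qed.

Lemma integral n (p : mpoly C n) : IV p -> exists q, iCn C n q = p.
Proof.
elim: n p => [|n IH] p Hp.
  have [z Hz] := Hp ('Z_2 : finZmodType) (fun _ => 0) 0.
  exists z; move: Hz; rewrite /= gscalE eqxx => ->; by [].
have Hq : forall i, exists q, iCn C n q == (p : {poly mpoly C n})`_i.
  by move=> i; have [q Eq] := IH _ (coef_IV Hp i); exists q; apply/eqP.
exists (\poly_(i < size (p : {poly mpoly C n})) xchoose (Hq i)).
rewrite iC_S; apply/polyP=> i; rewrite coef_map coef_poly.
case: ltnP => [_|le]; first exact/eqP/(xchooseP (Hq i)).
by rewrite raddf0 nth_default.
Qed.
End Integral.

Section MainSec.
Variables (C : numClosedFieldType) (F : finType).
Local Notation n := #|F|.
Definition iF (D : finZmodType) (a : AF F D) : {rmorphism mpoly int n -> gring int D} :=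
  mevalR (gscalR int D) (fun k => AFval int a (enum_val k)).
Definition AFeR (D : finZmodType) (a : AF F D) : {rmorphism mpoly C n -> gring C D} :=
  mevalR (gscalR C D) (fun k => AFval C a (enum_val k)).
Lemma iFE D a p : iF a p = meval (@gscal int D) (fun k => AFval int a (enum_val k)) p.
Proof. by []. Qed.
Lemma AFeRE D (a : AF F D) p : AFeR a p = meval (@gscal C D) (fun k => AFval C a (enum_val k)) p.
Proof. by []. Qed.
Lemma AFeE D (a : AF F D) p : AFe a p = AFeR a p.
Proof. by []. Qed.

Lemma iF_nat (D D' : finZmodType) (h : {additive D -> D'}) (a : AF F D) p :
  iF (AFmap h a) p = gmap h (iF a p).
Proof.
rewrite !iFE -gmapRE meval_phi; apply: meval_ext => [c|k] /=.
  by rewrite gmapRE gmap_scal.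
by rewrite gmapRE AFval_map.
Qed.

Lemma iF_comp (D : finZmodType) (a : AF F D) p : AFe a (iCn C n p) = @gcoef C D (iF a p).
Proof.
rewrite AFeE iCE meval_phi -gcoefRE iFE meval_phi.
apply: meval_ext => [z|k]; rewrite /comp.
  have -> : gscal D z = (z%:~R : gring int D) by rewrite -gscalRE -{1}[z]intz rmorph_int.
  by rewrite !rmorph_int.
by rewrite mevalRE meval_mvar gcoefRE AFval_coef.
Qed.

Lemma AF_finite : gadget_finite (AFgadget C F).
Proof.
move=> D; exists #|{: AF F D}|, (fun k => enum_val k) => a.
by exists (enum_rank (a : AF F D)); rewrite enum_rankK.
Qed.

Lemma iF_gmorph : gmorph_G (X := AFgadget C F) iF (iCn C n).
Proof.
split; first by move=> D D' h a p; exact: iF_nat.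
by move=> D a p; exact: iF_comp.
Qed.

Lemma iF_imm : gimmersion_G (X := AFgadget C F) iF (iCn C n).
Proof.
split; first exact: iF_gmorph.
split.
  move=> S Sc Hc Hi b; apply: mclosure => //.
  by move=> k; have := Hi (mvar int k); rewrite iC_mvar.
move=> D a b E; apply: (@AFval_inj F int D) => j.
by have := E (mvar int (enum_rank j)); rewrite /iF !mevalRE !meval_mvar enum_rankK.
Qed.
End MainSec.

Theorem proposition3p2 (C : numClosedFieldType) (F : finType) :
  affine_F1_with (AFgadget C F) (mpoly int #|F|).
Proof.
split; first exact: AF_finite.
split; first exact: fin_gen_mpoly.
exists (@iF F), (iCn C #|F|); split; first exact: iF_imm.
move=> O _ u uC [Hnat Hcomp].
have Hint : forall o, exists q, iCn C #|F| q == uC o.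
  move=> o; have [q <-] : exists q, iCn C #|F| q = uC o.
    apply: integral => D g x.
    exists (u D (afull g) o x).
    have := Hcomp D (afull g) o; rewrite /= AFeE => E.
    have Ev : (fun k => AFval C (afull g) (enum_val k)) =1 (fun k => gdelta C (g k)).
      by move=> k; rewrite AFval_full.
    by rewrite -gcoefE -E AFeRE (meval_ext (c' := @gscal C D) (frefl _) Ev).
  by exists q.
pose psi0 o := xchoose (Hint o).
have Hpsi : forall o, iCn C #|F| (psi0 o) = uC o by move=> o; apply/eqP/(xchooseP (Hint o)).
have psiA : zmod_morphism psi0.
  by move=> x y; apply: (@iC_inj C); rewrite rmorphB !Hpsi rmorphB.
have psiM : monoid_morphism psi0.
  split; first by apply: (@iC_inj C); rewrite Hpsi !rmorph1.
  by move=> x y; apply: (@iC_inj C); rewrite rmorphM !Hpsi rmorphM.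
exists (mkRM psiA psiM); split.
  split=> [D a o|o]; last by rewrite /= Hpsi.
  apply: (@gcoef_inj C D); rewrite -[(iF a \o _) o]/(iF a (psi0 o)) -iF_comp Hpsi.
  by have := Hcomp D a o.
move=> psi' [_ H2] o; apply: (@iC_inj C).
by have := H2 o; rewrite /= => <-; rewrite Hpsi.
Qed.
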